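(* Let $G$ be a non-trivial graph with maximum degree $\Delta$. Then $$ \begin{aligned} \tfrac{8}{11}\, H(G) \le H(\mathcal{L}(G)) \le H(G) & \quad \text{ if } \Delta<3,\\ \tfrac{4}{\Delta+3}\, H(G) \le H(\mathcal{L}(G)) \le (\Delta-1) H(G) & \quad \text{ if } 3 \le \Delta \le 4,\\ \tfrac{3}{2\Delta-1}\, H(G) \le H(\mathcal{L}(G)) \le (\Delta-1) H(G) & \quad \text{ if } \Delta>4. \end{aligned} $$
   Context: All graphs are finite and simple. A graph is non-trivial if each of its connected components has at least two edges. $d_u$ is the degree of $u$. The harmonic index is $H(G)=\sum_{uv\in E(G)}\frac{2}{d_u+d_v}$. The line graph $\mathcal{L}(G)$ has vertex set $E(G)$, two vertices being adjacent iff the corresponding edges share an end vertex in $G$. *)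

(* Defs.v *)
(* A simple graph on a finite vertex type T is a
   symmetric irreflexive relation e : rel T. *)
From HB Require Import structures.
From mathcomp Require Import all_boot all_order all_algebra.
Set Implicit Arguments. Unset Strict Implicit. Unset Printing Implicit Defensive.
Import Order.TTheory GRing.Theory Num.Theory.

Section Graphs.
Variable T : finType.
Variable e : rel T.

Definition edges : {set {set T}} :=
  [set A : {set T} | [exists x, exists y, (e x y) && (A == [set x; y])]].

Definition deg (u : T) : nat := #|[set v | e u v]|.

Definition maxdeg : nat := \max_(u : T) deg u.

Definition nontrivial : Prop :=
  forall u : T,
    2 <= #|[set A in edges | A \subset [set v | connect e u v]]|.

Definition harmonic (R : fieldType) : R :=
  \sum_(A in edges) 2 / (\sum_(u in A) deg u)%:R.
End Graphs.

(* line graph: vertices are the edges of G (represented as subsets of T;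
   subsets that are not edges of G are isolated vertices of this relation
   and do not affect edges / the harmonic index), two being adjacent iff
   they are distinct edges sharing an end vertex *)
Definition line_rel (T : finType) (e : rel T) : rel {set T} :=
  fun A B => [&& A \in edges e, B \in edges e, A != B & A :&: B != set0].

(* Main.v *)
Require Import Defs.
From HB Require Import structures.
From mathcomp Require Import all_boot all_order all_algebra.
From mathcomp Require Import zify ring lra.
Import Order.TTheory GRing.Theory Num.Theory.
Local Open Scope ring_scope.
Set Implicit Arguments. Unset Strict Implicit.

Section Gen.
Variables (S : finType) (r : rel S).
Hypotheses (r_sym : symmetric r) (r_irr : irreflexive r).

Lemma in_edgesP A : reflect (exists x y, r x y /\ A = [set x; y]) (A \in edges r).
Proof.
rewrite inE; apply: (iffP existsP) => [[x /existsP [y /andP [rxy /eqP ->]]]|[x [y [rxy ->]]]].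
  by exists x, y.
by exists x; apply/existsP; exists y; rewrite rxy eqxx.
Qed.

Lemma r_neq x y : r x y -> x != y.
Proof. by apply: contraTneq => ->; rewrite r_irr. Qed.

Lemma set2_eqE (a b x y : S) : a != b -> [set a; b] = [set x; y] ->
  (a = x /\ b = y) \/ (a = y /\ b = x).
Proof.
move=> ab E.
have : a \in [set x; y] by rewrite -E set21.
have : b \in [set x; y] by rewrite -E set22.
move=> /set2P [] Hb /set2P [] Ha; subst; by [left; split | right; split | rewrite eqxx in ab].
Qed.

Lemma set2_inj (x u w : S) : u != x -> w != x -> [set x; u] = [set x; w] -> u = w.
Proof.
move=> ux wx E; have : u \in [set x; w] by rewrite -E set22.
by case/set2P => // ux'; rewrite ux' eqxx in ux.
Qed.

Lemma edge_at A z : A \in edges r -> z \in A -> exists w, r z w /\ A = [set z; w].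
Proof.
case/in_edgesP => [x [y [rxy ->]]] /set2P [] ->.
  by exists y.
by exists x; rewrite r_sym setUC.
Qed.

Lemma edges_dcount (R : nmodType) (F : {set S} -> R) :
  (\sum_(A in edges r) F A) *+ 2 = \sum_x \sum_(y | r x y) F [set x; y].
Proof.
rewrite pair_big_dep (partition_big (fun p => [set p.1; p.2]) (mem (edges r))) /=; last first.
  by move=> [x y] /= rxy; apply/in_edgesP; exists x, y.
rewrite -sumrMnl; apply: eq_bigr => A /in_edgesP [x [y [rxy EA]]].
rewrite (eq_bigr (fun=> F A)); last by move=> p /andP [_ /eqP ->].
rewrite sumr_const; congr (_ *+ _).
have xy : (x, y) != (y, x).
  apply/negP => /eqP [E _].
  by rewrite E r_irr in rxy.
symmetry; transitivity #|[set (x, y); (y, x)]|; last by rewrite cards2 xy.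
apply: eq_card => [[a b]]; rewrite !inE /= EA.
apply/andP/orP.
  move=> /= [rab /eqP E]; case: (set2_eqE (r_neq rab) E) => [[-> ->]|[-> ->]].
    by left.
  by right.
case=> /eqP [-> ->] /=; split => //; first by rewrite r_sym.
by rewrite setUC.
Qed.

Lemma sum_set2 (x y : S) (f : S -> nat) : x != y -> (\sum_(u in [set x; y]) f u = f x + f y)%N.
Proof. by move=> xy; rewrite big_setU1 ?big_set1 // inE. Qed.

End Gen.


Section Graph.
Variables (T : finType) (e : rel T).
Hypotheses (e_sym : symmetric e) (e_irr : irreflexive e).

Local Notation d := (deg e).

Lemma line_sym : symmetric (line_rel e).
Proof.
move=> A B; rewrite /line_rel; case: (A \in edges e); case: (B \in edges e) => //=.
by rewrite eq_sym setIC.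
Qed.

Lemma line_irr : irreflexive (line_rel e).
Proof. by move=> A; rewrite /line_rel eqxx /= !andbF. Qed.

Lemma card_nbr_minus x y : e x y -> #|[set w | e x w && (w != y)]| = (d x).-1.
Proof.
move=> exy; rewrite /deg (cardsD1 y [set v | e x v]) inE exy add1n /=.
by apply: eq_card => w; rewrite !inE andbC.
Qed.

Lemma degL x y : e x y -> deg (line_rel e) [set x; y] = ((d x).-1 + (d y).-1)%N.
Proof.
move=> exy.
have xy := r_neq e_irr exy.
pose X := [set [set x; w] | w in [set w | e x w && (w != y)]].
pose Y := [set [set y; w] | w in [set w | e y w && (w != x)]].
have inj z : {in [set w | e z w] &, injective (fun w => [set z; w])}.
  move=> w1 w2; rewrite !inE => e1 e2; apply: set2_inj.
  - by rewrite eq_sym (r_neq e_irr e1).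
  - by rewrite eq_sym (r_neq e_irr e2).
have cX : #|X| = (d x).-1.
  rewrite card_in_imset ?card_nbr_minus //.
  by move=> w1 w2; rewrite !inE => /andP [e1 _] /andP [e2 _]; apply: inj; rewrite inE.
have cY : #|Y| = (d y).-1.
  rewrite card_in_imset ?card_nbr_minus // 1?e_sym //.
  by move=> w1 w2; rewrite !inE => /andP [e1 _] /andP [e2 _]; apply: inj; rewrite inE.
have XY : X :&: Y = set0.
  apply/setP => B; rewrite !inE; apply/negP => /andP [/imsetP [w]].
  rewrite inE => /andP [exw wy] -> /imsetP [w']; rewrite inE => /andP [eyw' w'x].
  case/(set2_eqE (r_neq e_irr exw)) => [[xy' _]|[xw' wy']].
    by rewrite xy' eqxx in xy.
  by rewrite xw' eqxx in w'x.
have Aed : [set x; y] \in edges e by apply/in_edgesP; exists x, y.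
rewrite /deg.
have -> : [set B | line_rel e [set x; y] B] = X :|: Y.
  apply/setP => B; rewrite !inE; apply/idP/idP.
    rewrite /line_rel Aed /= => /and3P [Bed AB /set0Pn [z]].
    rewrite inE => /andP [zA zB].
    case: (edge_at e_sym Bed zB) => w [ezw EB].
    case/set2P: zA => Ez; subst z.
      apply/orP; left; apply/imsetP; exists w => //; rewrite inE ezw /=.
      by apply: contraNneq AB => wy; rewrite EB wy.
    apply/orP; right; apply/imsetP; exists w => //; rewrite inE ezw /=.
    by apply: contraNneq AB => wx; rewrite EB wx setUC.
  case/orP => /imsetP [w]; rewrite inE => /andP [ezw wz] ->.
    rewrite /line_rel Aed /=; apply/and3P; split.
    - by apply/in_edgesP; exists x, w.
    - apply/negP => /eqP E; have : y \in [set x; w] by rewrite -E set22.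
      case/set2P => E'.
        by rewrite E' eqxx in xy.
      by rewrite E' eqxx in wz.
    - by apply/set0Pn; exists x; rewrite !inE !eqxx.
  rewrite /line_rel Aed /=; apply/and3P; split.
  - by apply/in_edgesP; exists y, w.
  - apply/negP => /eqP E; have : x \in [set y; w] by rewrite -E set21.
    case/set2P => E'.
      by rewrite E' eqxx in xy.
    by rewrite E' eqxx in wz.
  - by apply/set0Pn; exists y; rewrite !inE !eqxx orbT.
by rewrite cardsU XY cards0 subn0 cX cY.
Qed.


Variable R : realFieldType.

Lemma HG2 : harmonic e R *+ 2 = \sum_v \sum_(u | e v u) 2 / (d v + d u)%:R.
Proof.
rewrite /harmonic edges_dcount //; apply: eq_bigr => v _; apply: eq_bigr => u evu.
by rewrite sum_set2 // (r_neq e_irr evu).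
Qed.

Definition gL (v u w : T) : R := 2 / (((d v).-1 + (d u).-1) + ((d v).-1 + (d w).-1))%:R.

Lemma HL2 : harmonic (line_rel e) R *+ 2 =
  \sum_v \sum_(u | e v u) \sum_(w | e v w && (w != u)) gL v u w.
Proof.
rewrite /harmonic edges_dcount; [|exact: line_sym|exact: line_irr].
rewrite (eq_bigr (fun A => \sum_(B | line_rel e A B)
   2 / (deg (line_rel e) A + deg (line_rel e) B)%:R)); last first.
  move=> A _; apply: eq_bigr => B AB; rewrite sum_set2 //.
  by move: AB; rewrite /line_rel => /and4P [].
rewrite pair_big_dep /=.
pose D := [set t : T * (T * T) | [&& e t.1 t.2.1, e t.1 t.2.2 & t.2.2 != t.2.1]].
pose f := fun t : T * (T * T) => ([set t.1; t.2.1], [set t.1; t.2.2]).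
have finj : {in D &, injective f}.
  move=> [v [u w]] [v' [u' w']]; rewrite !inE /= => /and3P [evu evw wu] /and3P [evu' evw' wu'].
  rewrite /f /= => [[E1 E2]].
  have vv' : v = v'.
    have : v \in [set v'; u'] by rewrite -E1 set21.
    have : v \in [set v'; w'] by rewrite -E2 set21.
    case/set2P => // -> /set2P [] // E; by rewrite E eqxx in wu'.
  subst v'.
  have nv z : e v z -> z != v by move=> evz; rewrite eq_sym (r_neq e_irr evz).
  by rewrite (set2_inj (nv _ evu) (nv _ evu') E1) (set2_inj (nv _ evw) (nv _ evw') E2).
have imD : f @: D = [set p | line_rel e p.1 p.2].
  apply/setP => [[A B]]; rewrite inE /=; apply/imsetP/idP.
    move=> [[v [u w]]]; rewrite inE /= => /and3P [evu evw wu] [-> ->].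
    rewrite /line_rel; apply/and4P; split.
    - by apply/in_edgesP; exists v, u.
    - by apply/in_edgesP; exists v, w.
    - apply/negP => /eqP E.
      have nv z : e v z -> z != v by move=> evz; rewrite eq_sym (r_neq e_irr evz).
      by rewrite (set2_inj (nv _ evu) (nv _ evw) E) eqxx in wu.
    - by apply/set0Pn; exists v; rewrite !inE !eqxx.
  rewrite /line_rel => /and4P [Aed Bed AB /set0Pn [z]].
  rewrite inE => /andP [zA zB].
  case: (edge_at e_sym Aed zA) => u [ezu EA].
  case: (edge_at e_sym Bed zB) => w [ezw EB].
  exists (z, (u, w)); last by rewrite /f /= EA EB.
  rewrite inE /= ezu ezw /=; apply: contraNneq AB => wu.
  by rewrite EA EB wu.
have -> : \sum_v \sum_(u | e v u) \sum_(w | e v w && (w != u)) gL v u w =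
    \sum_(t in D) gL t.1 t.2.1 t.2.2.
  under eq_bigr => v _ do rewrite pair_big_dep.
  rewrite pair_big_dep; apply: eq_bigl => t; rewrite !inE.
  by case: t => [v [u w]].
rewrite (eq_bigl (fun p => p \in f @: D) (fun p => 2 / (deg (line_rel e) p.1 + deg (line_rel e) p.2)%:R : R)); last by move=> p; rewrite imD in_set.
rewrite big_imset //; apply: eq_bigr => [[v [u w]]]; rewrite inE /= => /and3P [evu evw _].
by rewrite /gL (degL evu) (degL evw).
Qed.

End Graph.


Section Graph2.
Variables (T : finType) (e : rel T).
Hypotheses (e_sym : symmetric e) (e_irr : irreflexive e).
Local Notation d := (deg e).

Lemma deg_gt0 x y : e x y -> (0 < d x)%N.
Proof. by move=> exy; apply/card_gt0P; exists y; rewrite inE. Qed.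

Lemma deg_ge2 v u w : e v u -> e v w -> w != u -> (2 <= d v)%N.
Proof.
move=> evu evw wu; have c2 : #|[set u; w]| = 2%N by rewrite cards2 eq_sym wu.
rewrite /deg -c2.
by apply: subset_leq_card; apply/subsetP => z /set2P [] ->; rewrite inE.
Qed.

Lemma deg_le_max x : (d x <= maxdeg e)%N.
Proof. exact: (@leq_bigmax _ (fun u => deg e u) x). Qed.

Lemma nontriv_deg (Hnt : nontrivial e) x y : e x y -> (3 <= d x + d y)%N.
Proof.
move=> exy.
have eyx : e y x by rewrite e_sym.
have dx := deg_gt0 exy; have dy := deg_gt0 eyx.
rewrite leqNgt; apply/negP => H.
have d1 z z' : e z z' -> (d z <= 1)%N -> [set v | e z v] = [set z'].
  move=> ezz' dz; have : #|[set v | e z v]| == 1%N.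
    by rewrite eqn_leq dz (deg_gt0 ezz').
  case/cards1P => z0 E; have : z' \in [set v | e z v] by rewrite inE.
  by rewrite E inE => /eqP ->.
have Nx := d1 _ _ exy (ltac:(lia)).
have Ny := d1 y x eyx (ltac:(lia)).
pose S := [set x; y].
have nS a b : a \in S -> e a b -> b \in S.
  case/set2P => -> eab.
    have : b \in [set v | e x v] by rewrite inE.
    by rewrite Nx inE => /eqP ->; rewrite set22.
  have : b \in [set v | e y v] by rewrite inE.
  by rewrite Ny inE => /eqP ->; rewrite set21.
have clS : closed e (mem S).
  move=> a b eab; apply/idP/idP => /=.
    by move=> aS; apply: nS aS eab.
  by move=> bS; apply: nS bS _; rewrite e_sym.
have := Hnt x; apply/negP; rewrite -ltnNge ltnS.
rewrite -(cards1 [set x; y]); apply: subset_leq_card; apply/subsetP => A.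
rewrite in_set => /andP [/in_edgesP [a [b [eab ->]]] /subsetP sub].
have inS z : z \in [set a; b] -> z \in S.
  move=> /sub; rewrite inE => /(closed_connect clS) <-; exact: set21.
have aS := inS a (set21 _ _); have bS := inS b (set22 _ _).
have ab := r_neq e_irr eab.
move: aS bS ab; rewrite !inE => /orP [] /eqP -> /orP [] /eqP ->; rewrite ?eqxx //.
by rewrite setUC.
Qed.

End Graph2.


Section Key.
Variables (T : finType) (e : rel T) (R : realFieldType).
Hypotheses (e_sym : symmetric e) (e_irr : irreflexive e).
Local Notation d := (deg e).
Variable beta : nat -> nat -> R.

Lemma key :
  \sum_v \sum_(u | e v u) (beta (d u) (d v) *+ (d v).-1 + beta (d v) (d u) *+ (d u).-1) =
  \sum_v \sum_(u | e v u) \sum_(w | e v w && (w != u)) (beta (d u) (d v) + beta (d w) (d v)).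
Proof.
have L : \sum_v \sum_(u | e v u) beta (d v) (d u) *+ (d u).-1 =
         \sum_v \sum_(u | e v u) beta (d u) (d v) *+ (d v).-1.
  rewrite (exchange_big_dep xpredT) //=; apply: eq_bigr => u _.
  by apply: eq_bigl => v; rewrite e_sym.
have Rr : \sum_v \sum_(u | e v u) \sum_(w | e v w && (w != u)) beta (d w) (d v) =
          \sum_v \sum_(u | e v u) \sum_(w | e v w && (w != u)) beta (d u) (d v).
  apply: eq_bigr => v _.
  rewrite (exchange_big_dep (e v)) /=; last by move=> u w _ /andP [].
  apply: eq_bigr => w evw; apply: eq_bigl => u.
  by rewrite evw /= eq_sym; case: (e v u).
have M : \sum_v \sum_(u | e v u) beta (d u) (d v) *+ (d v).-1 =
         \sum_v \sum_(u | e v u) \sum_(w | e v w && (w != u)) beta (d u) (d v).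
  apply: eq_bigr => v _; apply: eq_bigr => u evu.
  rewrite sumr_const; congr (_ *+ _).
  rewrite -(card_nbr_minus evu); apply: eq_card => w; by rewrite !inE.
under eq_bigr => v _ do rewrite big_split /=.
rewrite big_split /= L.
under [RHS]eq_bigr => v _ do (under eq_bigr => u _ do rewrite big_split /=; rewrite big_split /=).
by rewrite big_split /= Rr M.
Qed.

Definition S2 := \sum_v \sum_(u | e v u) 2 / (d v + d u)%:R : R.
Definition S3 := \sum_v \sum_(u | e v u) \sum_(w | e v w && (w != u)) gL e R v u w.

Lemma lower_chain (c : R) : 0 <= c ->
  (forall v u, e v u -> 2 / (d v + d u)%:R <= beta (d u) (d v) *+ (d v).-1 + beta (d v) (d u) *+ (d u).-1) ->
  (forall v u w, e v u -> e v w -> w != u -> c * (beta (d u) (d v) + beta (d w) (d v)) <= gL e R v u w) ->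
  c * S2 <= S3.
Proof.
move=> c0 HE HP.
apply: (le_trans (ler_wpM2l c0 (ler_sum _ (fun v _ => ler_sum _ (fun u evu => HE v u evu))))).
rewrite key big_distrr /=; apply: ler_sum => v _.
rewrite big_distrr /=; apply: ler_sum => u evu.
rewrite big_distrr /=; apply: ler_sum => w /andP [evw wu].
exact: HP.
Qed.

Lemma upper_chain (K : R) : 0 <= K ->
  (forall v u, e v u -> 2 / (d v + d u)%:R = beta (d u) (d v) *+ (d v).-1 + beta (d v) (d u) *+ (d u).-1) ->
  (forall v u w, e v u -> e v w -> w != u -> gL e R v u w <= K * (beta (d u) (d v) + beta (d w) (d v))) ->
  S3 <= K * S2.
Proof.
move=> K0 HE HP.
rewrite /S2 (eq_bigr (fun v => \sum_(u | e v u) (beta (d u) (d v) *+ (d v).-1 + beta (d v) (d u) *+ (d u).-1))); last first.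
  by move=> v _; apply: eq_bigr => u evu; apply: HE.
rewrite key big_distrr /=; apply: ler_sum => v _.
rewrite big_distrr /=; apply: ler_sum => u evu.
rewrite big_distrr /=; apply: ler_sum => w /andP [evw wu].
exact: HP.
Qed.

End Key.

Lemma nat_up p q k : (p + 2 <= 4 * k)%N -> (q + 2 <= 4 * k)%N ->
  ((p + 2) * p * ((q + 2) * q) <= k * ((p + 2) * p + (q + 2) * q) * (p + q))%N.
Proof.
move=> hp hq.
have A1 : ((q+2) * ((p + 2) * p * (p+q)) <= (4*k) * ((p + 2) * p * (p+q)))%N by apply: leq_mul.
have A2 : ((p+2) * ((q + 2) * q * (p+q)) <= (4*k) * ((q + 2) * q * (p+q)))%N by apply: leq_mul.
have E1 : ((q+2) * ((p + 2) * p * (p+q)) + (p+2) * ((q + 2) * q * (p+q)) = ((p+q) * (p+q)) * ((p+2) * (q+2)))%N by ring.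
have A3 : ((4 * (p*q)) * ((p+2) * (q+2)) <= ((p+q) * (p+q)) * ((p+2) * (q+2)))%N.
  by apply: leq_mul => //; exact: (nat_AGM2 p q).1.
have E2 : ((4 * (p*q)) * ((p+2) * (q+2)) = 4 * ((p + 2) * p * ((q + 2) * q)))%N by ring.
have E3 : ((4*k) * ((p + 2) * p * (p+q)) + (4*k) * ((q + 2) * q * (p+q)) = 4 * (k * ((p + 2) * p + (q + 2) * q) * (p + q)))%N by ring.
lia.
Qed.

Lemma nat_low p q D : (1 <= p)%N -> (1 <= q)%N -> (4 <= D)%N -> (p <= q + D - 1)%N -> (q <= p + D - 1)%N ->
  (3 * ((p + 2) * p + (q + 2) * q) * (p + q) <= (2 * D - 1) * ((p + 2) * p * ((q + 2) * q)))%N.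
Proof.
move=> p1 q1 D4.
wlog pq : p q p1 q1 / (p <= q)%N.
  move=> H h1 h2; case: (leqP p q) => [pq|qp]; first exact: H.
  have := H q p q1 p1 (ltnW qp) h2 h1.
  have -> : ((q + 2) * q + (p + 2) * p = (p + 2) * p + (q + 2) * q)%N by ring.
  by rewrite (addnC q p) (mulnC ((q + 2) * q)).
move=> _ hq.
have i1 : (3 * (p + q) <= 2 * ((q + 2) * q))%N by nia.
have i2 : (3 * (p + q) <= (D + 1) * ((p + 2) * p))%N by nia.
have j1 : (3 * (p + q) * ((p+2) * p) <= 2 * ((q + 2) * q) * ((p+2) * p))%N by apply: leq_mul.
have j2 : (3 * (p + q) * ((q+2) * q) <= (D + 1) * ((p + 2) * p) * ((q+2) * q))%N by apply: leq_mul.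
have E1 : (3 * ((p + 2) * p + (q + 2) * q) * (p + q) = 3 * (p + q) * ((p+2) * p) + 3 * (p + q) * ((q+2) * q))%N by ring.
have E2 : (2 * ((q + 2) * q) * ((p+2) * p) + (D + 1) * ((p + 2) * p) * ((q+2) * q) = (D + 3) * ((p + 2) * p * ((q + 2) * q)))%N by ring.
have A : ((D + 3) * ((p + 2) * p * ((q + 2) * q)) <= (2 * D - 1) * ((p + 2) * p * ((q + 2) * q)))%N.
  by apply: leq_mul => //; lia.
lia.
Qed.

Section Num.
Variable R : realFieldType.

Lemma frac_le (n1 d1 n2 d2 : nat) : (0 < d1)%N -> (0 < d2)%N -> (n1 * d2 <= n2 * d1)%N ->
  n1%:R / d1%:R <= n2%:R / d2%:R :> R.
Proof.
move=> d1p d2p h.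
rewrite ler_pdivrMr ?ltr0n // mulrAC ler_pdivlMr ?ltr0n // -!natrM ler_nat.
exact: h.
Qed.

Lemma real_up (p q k : nat) : (1 <= p)%N -> (1 <= q)%N -> (p + 2 <= 4 * k)%N -> (q + 2 <= 4 * k)%N ->
  2 / (p + q)%:R <= k%:R * (2 / ((p + 2) * p)%:R + 2 / ((q + 2) * q)%:R) :> R.
Proof.
move=> p1 q1 hp hq.
have -> : k%:R * (2 / ((p + 2) * p)%:R + 2 / ((q + 2) * q)%:R) =
   (2 * (k * ((p + 2) * p + (q + 2) * q)))%:R / ((p + 2) * p * ((q + 2) * q))%:R :> R.
  rewrite !natrM !natrD.
  have hp0 : p%:R != 0 :> R by rewrite pnatr_eq0 -lt0n.
  have hq0 : q%:R != 0 :> R by rewrite pnatr_eq0 -lt0n.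
  have hp2 : p%:R + 2 != 0 :> R by rewrite -natrD pnatr_eq0 addn2.
  have hq2 : q%:R + 2 != 0 :> R by rewrite -natrD pnatr_eq0 addn2.
  by field; rewrite hq0 hq2 hp0 hp2.
apply: (@frac_le 2); [lia | nia | ].
have := nat_up hp hq; lia.
Qed.

Lemma real_low (p q D : nat) : (1 <= p)%N -> (1 <= q)%N -> (4 <= D)%N ->
  (p <= q + D - 1)%N -> (q <= p + D - 1)%N ->
  3 / (2 * D%:R - 1) * (2 / ((p + 2) * p)%:R + 2 / ((q + 2) * q)%:R) <= 2 / (p + q)%:R :> R.
Proof.
move=> p1 q1 D4 h1 h2.
have -> : 3 / (2 * D%:R - 1) * (2 / ((p + 2) * p)%:R + 2 / ((q + 2) * q)%:R) =
   (6 * ((p + 2) * p + (q + 2) * q))%:R / ((2 * D - 1) * ((p + 2) * p * ((q + 2) * q)))%:R :> R.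
  rewrite !natrM natrB; last by lia.
  rewrite !natrM !natrD.
  have hp0 : p%:R != 0 :> R by rewrite pnatr_eq0 -lt0n.
  have hq0 : q%:R != 0 :> R by rewrite pnatr_eq0 -lt0n.
  have hp2 : p%:R + 2 != 0 :> R by rewrite -natrD pnatr_eq0 addn2.
  have hq2 : q%:R + 2 != 0 :> R by rewrite -natrD pnatr_eq0 addn2.
  have hD4 : (4:R) <= D%:R by rewrite (ler_nat R 4 D).
  have hD : 2 * D%:R - 1 != 0 :> R by apply/eqP => h; lra.
  by field; rewrite hq0 hq2 hp0 hp2 hD.
apply: (@frac_le _ _ 2); [rewrite !muln_gt0; lia | lia | ].
have := nat_low p1 q1 D4 h1 h2; lia.
Qed.

Definition betaU (a b : nat) : R := 2 / ((b.-1 + a.-1 + 2) * (b.-1 + a.-1))%:R.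

Lemma EU (a b : nat) : (1 <= a)%N -> (1 <= b)%N -> (3 <= b + a)%N ->
  2 / (b + a)%:R = betaU a b *+ b.-1 + betaU b a *+ a.-1.
Proof.
move=> a1 b1 ab3.
rewrite /betaU (addnC a.-1) -mulrnDr.
have E : (b + a = (b.-1 + a.-1) + 2)%N by lia.
have p1 : (1 <= b.-1 + a.-1)%N by lia.
rewrite E; move: (b.-1 + a.-1)%N p1 => p p1.
rewrite -mulr_natr natrM natrD.
have hp0 : p%:R != 0 :> R by rewrite pnatr_eq0 -lt0n.
have hp2 : p%:R + 2 != 0 :> R by rewrite -natrD pnatr_eq0 addn2.
by field; rewrite hp0 hp2.
Qed.


Definition betaM (a b : nat) : R :=
  if (b == 2%N) && (2 < a)%N then 0
  else if (a == 2%N) && (2 < b)%N then 2 / ((b + 2) * b.-1)%:R else betaU a b.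

Ltac fin := rewrite /betaM /betaU /= ?mulnE ?addnE /=; lra.

Lemma EM (a b : nat) : (0 < a <= 4)%N -> (0 < b <= 4)%N -> (3 <= b + a)%N ->
  2 / (b + a)%:R <= betaM a b *+ b.-1 + betaM b a *+ a.-1.
Proof.
rewrite -[_ *+ b.-1]mulr_natr -[_ *+ a.-1]mulr_natr.
Time (case: a => [|[|[|[|[|a]]]]] //; case: b => [|[|[|[|[|b]]]]] // _ _ _; fin).
Qed.

Lemma PM4 (a b x : nat) : (0 < a <= 4)%N -> (1 < b <= 4)%N -> (0 < x <= 4)%N ->
  4 / 7 * (betaM a b + betaM x b) <= 2 / ((b.-1 + a.-1) + (b.-1 + x.-1))%:R.
Proof.
case: a => [|[|[|[|[|a]]]]] //; case: b => [|[|[|[|[|b]]]]] //;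
  case: x => [|[|[|[|[|x]]]]] // _ _ _; fin.
Qed.

Lemma PM3 (a b x : nat) : (0 < a <= 3)%N -> (1 < b <= 3)%N -> (0 < x <= 3)%N ->
  4 / 6 * (betaM a b + betaM x b) <= 2 / ((b.-1 + a.-1) + (b.-1 + x.-1))%:R.
Proof.
case: a => [|[|[|[|a]]]] //; case: b => [|[|[|[|b]]]] //;
  case: x => [|[|[|[|x]]]] // _ _ _; fin.
Qed.

Lemma PU2 (a b x : nat) : (0 < a <= 2)%N -> (1 < b <= 2)%N -> (0 < x <= 2)%N ->
  8 / 11 * (betaU a b + betaU x b) <= 2 / ((b.-1 + a.-1) + (b.-1 + x.-1))%:R.
Proof.
case: a => [|[|[|a]]] //; case: b => [|[|[|b]]] //;
  case: x => [|[|[|x]]] // _ _ _; fin.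
Qed.

End Num.


Unset Implicit Arguments. Set Strict Implicit.

Theorem theorem3p5 (R : realFieldType) (T : finType) (e : rel T)
  (e_sym : symmetric e) (e_irr : irreflexive e) (Hnt : nontrivial e) :
  let D := maxdeg e in
  let HG := harmonic e R in
  let HL := harmonic (line_rel e) R in
  [/\ (D < 3)%N -> 8 / 11 * HG <= HL /\ HL <= HG,
      (3 <= D <= 4)%N ->
        4 / (D%:R + 3) * HG <= HL /\ HL <= (D%:R - 1) * HG
    & (4 < D)%N ->
        3 / (2 * D%:R - 1) * HG <= HL /\ HL <= (D%:R - 1) * HG].
Proof.
move=> D HG HL.
have hG : HG *+ 2 = S2 e R by rewrite /HG HG2.
have hL : HL *+ 2 = S3 e R by rewrite /HL HL2.
have degs v u : e v u ->
    [/\ (1 <= deg e u <= D)%N, (1 <= deg e v <= D)%N & (3 <= deg e v + deg e u)%N].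
  move=> evu; have euv : e u v by rewrite e_sym.
  rewrite (deg_gt0 evu) (deg_gt0 euv) (deg_le_max e u) (deg_le_max e v).
  by split => //; apply: (nontriv_deg e_sym e_irr Hnt evu).
have lowerP (c : R) beta : 0 <= c ->
    (forall v u, e v u -> 2 / (deg e v + deg e u)%:R <=
       beta (deg e u) (deg e v) *+ (deg e v).-1 + beta (deg e v) (deg e u) *+ (deg e u).-1) ->
    (forall v u w, e v u -> e v w -> w != u ->
       c * (beta (deg e u) (deg e v) + beta (deg e w) (deg e v)) <= gL e R v u w) ->
    c * HG <= HL.
  move=> c0 HE HP; have := lower_chain e_sym c0 HE HP.
  by rewrite -hG -hL !mulr2n mulrDr => h; lra.
have upper (k : nat) : (forall v u w, e v u -> e v w -> w != u ->
      (deg e v).-1 + (deg e u).-1 + 2 <= 4 * k)%N -> HL <= k%:R * HG.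
  move=> hk.
  have := @upper_chain _ _ R e_sym (betaU R) k%:R (ler0n _ _).
  rewrite -hG -hL !mulr2n mulrDr => h; suff : HL + HL <= k%:R * HG + k%:R * HG by lra.
  apply: h.
    move=> v u evu; have [/andP [a1 _] /andP [b1 _] ab3] := degs v u evu.
    exact: EU.
  move=> v u w evu evw wu.
  have [/andP [a1 _] /andP [b1 _] _] := degs v u evu.
  have [/andP [x1 _] _ _] := degs v w evw.
  have b2 := deg_ge2 evu evw wu.
  rewrite /gL /betaU; apply: real_up; try lia.
    exact: hk evu evw wu.
  have wu' : u != w by rewrite eq_sym.
  have := hk v w u evw evu wu'; lia.
split.
- move=> D3; split.
    apply: (lowerP _ (betaU R)); first lra.
      move=> v u evu; have [/andP [a1 _] /andP [b1 _] ab3] := degs v u evu.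
      by rewrite (EU R a1 b1 ab3).
    move=> v u w evu evw wu.
    have [/andP [a1 aD] /andP [b1 bD] _] := degs v u evu.
    have [/andP [x1 xD] _ _] := degs v w evw.
    have b2 := deg_ge2 evu evw wu.
    apply: PU2; apply/andP; split; lia.
  rewrite -[HG]mul1r; apply: (upper 1%N).
  move=> v u w evu evw wu.
  have [/andP [a1 aD] /andP [b1 bD] _] := degs v u evu; lia.
- move=> /andP [D3 D4]; split; last first.
    rewrite (_ : D%:R - 1 = (D - 1)%:R); last by rewrite natrB //; lia.
    apply: upper => v u w evu evw wu.
    have [/andP [a1 aD] /andP [b1 bD] _] := degs v u evu; lia.
  have bE v u : e v u -> 2 / (deg e v + deg e u)%:R <=
       betaM R (deg e u) (deg e v) *+ (deg e v).-1 + betaM R (deg e v) (deg e u) *+ (deg e u).-1.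
    move=> evu; have [/andP [a1 aD] /andP [b1 bD] ab3] := degs v u evu.
    apply: EM => //; apply/andP; split; lia.
  have [DE|DE] : D = 3%N \/ D = 4%N by lia.
    rewrite DE (_ : 4 / (3%:R + 3) = 4 / 6 :> R); last by congr (_ / _); rewrite -natrD.
    apply: (lowerP _ (betaM R)) => //; first lra.
    move=> v u w evu evw wu.
    have [/andP [a1 aD] /andP [b1 bD] _] := degs v u evu.
    have [/andP [x1 xD] _ _] := degs v w evw.
    have b2 := deg_ge2 evu evw wu.
    apply: PM3; apply/andP; split; lia.
  rewrite DE (_ : 4 / (4%:R + 3) = 4 / 7 :> R); last by congr (_ / _); rewrite -natrD.
  apply: (lowerP _ (betaM R)) => //; first lra.
  move=> v u w evu evw wu.
  have [/andP [a1 aD] /andP [b1 bD] _] := degs v u evu.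
  have [/andP [x1 xD] _ _] := degs v w evw.
  have b2 := deg_ge2 evu evw wu.
  apply: PM4; apply/andP; split; lia.
- move=> D5; split; last first.
    rewrite (_ : D%:R - 1 = (D - 1)%:R); last by rewrite natrB //; lia.
    apply: upper => v u w evu evw wu.
    have [/andP [a1 aD] /andP [b1 bD] _] := degs v u evu; lia.
  apply: (lowerP _ (betaU R)).
  + have hD : (5 : R) <= D%:R by rewrite (ler_nat R 5 D).
    apply: divr_ge0; lra.
  + move=> v u evu; have [/andP [a1 _] /andP [b1 _] ab3] := degs v u evu.
    by rewrite (EU R a1 b1 ab3).
  move=> v u w evu evw wu.
  have [/andP [a1 aD] /andP [b1 bD] _] := degs v u evu.
  have [/andP [x1 xD] _ _] := degs v w evw.
  have b2 := deg_ge2 evu evw wu.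
  rewrite /gL /betaU; apply: real_low; lia.
Qed.
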